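(* Let $\mathbb{F}$ be a field of characteristic different from $2$, let $n\geq3$, and let $\mathcal{A}$ be a division $*$-algebra which is one of: $\mathbb{F}$, a binarion algebra $\mathcal{B}(\mathbb{F})$, or a quaternion algebra $\mathcal{Q}(\mathbb{F})$. Let $H_n(\mathcal{A})$ be the Jordan algebra of self-adjoint $n\times n$ matrices over $\mathcal{A}$. Then every 2-local 1-automorphism on $H_n(\mathcal{A})$ is an automorphism.
   Context: $\mathbb{F}$ carries the trivial involution. $\mathcal{B}(\mathbb{F})$ is the associative unital algebra with basis $\mathbf{1},i$, $i^2=\lambda\mathbf{1}$ ($\lambda\neq0$), involution $\overline{\alpha_0+\alpha_1i}=\alpha_0-\alpha_1i$. $\mathcal{Q}(\mathbb{F})$ is the associative unital algebra with basis $\mathbf{1},i,j,k$, $i^2=\lambda\mathbf{1}$, $j^2=\mu\mathbf{1}$, $ij=-ji=k$ ($\lambda,\mu\neq0$), involution negating the $i,j,k$ coordinates. $M_n(\mathcal{A})$ has involution $(a_{i,j})^*=(\overline{a_{j,i}})$, $H_n(\mathcal{A})=\{x:x^*=x\}$ with Jordan product $a\circ b=\frac12(ab+ba)$. A symmetry is $s\in H_n(\mathcal{A})$ with $s\circ s=1$ (identity matrix), and $U_s(x)=2s\circ(s\circ x)-x$. A 2-local 1-automorphism is a map $\Delta:H_n(\mathcal{A})\to H_n(\mathcal{A})$ (not assumed linear) such that for every $x,y$ there is a symmetry $s$ with $\Delta(x)=U_s(x)$, $\Delta(y)=U_s(y)$. *)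

(* Defs.v *)
From mathcomp Require Import all_boot all_order all_algebra.
Set Implicit Arguments. Unset Strict Implicit. Unset Printing Implicit Defensive.
Import GRing.Theory.
Local Open Scope ring_scope.

(* Elements a0*1 + a1*i + a2*j + a3*k of the quaternion algebra Q(F)
   with i^2 = lam, j^2 = mu, ij = -ji = k.  The algebra F and the binarion
   algebra B(F) are realised as the *-subalgebras {a1=a2=a3=0} and
   {a2=a3=0} respectively (see [inA]). *)
Record quat (F : Type) := Quat { q0 : F; q1 : F; q2 : F; q3 : F }.

Section QuatOps.
Variable F : fieldType.
Variables lam mu : F.

Definition qzero : quat F := Quat 0 0 0 0.
Definition qone : quat F := Quat 1 0 0 0.
Definition qadd (a b : quat F) : quat F :=
  Quat (q0 a + q0 b) (q1 a + q1 b) (q2 a + q2 b) (q3 a + q3 b).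
Definition qopp (a : quat F) : quat F := Quat (- q0 a) (- q1 a) (- q2 a) (- q3 a).
Definition qscale (c : F) (a : quat F) : quat F :=
  Quat (c * q0 a) (c * q1 a) (c * q2 a) (c * q3 a).
(* k^2 = -lam*mu, ik = lam j, ki = -lam j, jk = -mu i, kj = mu i *)
Definition qmul (a b : quat F) : quat F :=
  Quat (q0 a * q0 b + lam * (q1 a * q1 b) + mu * (q2 a * q2 b)
          - lam * mu * (q3 a * q3 b))
       (q0 a * q1 b + q1 a * q0 b - mu * (q2 a * q3 b) + mu * (q3 a * q2 b))
       (q0 a * q2 b + q2 a * q0 b + lam * (q1 a * q3 b) - lam * (q3 a * q1 b))
       (q0 a * q3 b + q3 a * q0 b + q1 a * q2 b - q2 a * q1 b).
Definition qconj (a : quat F) : quat F := Quat (q0 a) (- q1 a) (- q2 a) (- q3 a).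

End QuatOps.

Inductive akind := KindF | KindB | KindQ.

Definition inA (F : fieldType) (k : akind) (a : quat F) : Prop :=
  match k with
  | KindF => q1 a = 0 /\ q2 a = 0 /\ q3 a = 0
  | KindB => q2 a = 0 /\ q3 a = 0
  | KindQ => True
  end.

Definition division_alg (F : fieldType) (lam mu : F) (k : akind) : Prop :=
  forall a, inA k a -> a <> qzero F ->
    exists b, inA k b /\ qmul lam mu a b = qone F /\ qmul lam mu b a = qone F.

Section MatOps.
Variable F : fieldType.
Variables lam mu : F.
Variable n : nat.
Local Notation M := 'M[quat F]_n.

Definition madd (x y : M) : M := \matrix_(i, j) qadd (x i j) (y i j).
Definition mopp (x : M) : M := \matrix_(i, j) qopp (x i j).
Definition mscale (c : F) (x : M) : M := \matrix_(i, j) qscale c (x i j).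
Definition mmul (x y : M) : M :=
  \matrix_(i, j) \big[@qadd F/qzero F]_(l < n) qmul lam mu (x i l) (y l j).
Definition mid : M := \matrix_(i, j) if i == j then qone F else qzero F.
Definition madj (x : M) : M := \matrix_(i, j) qconj (x j i).

Definition inH (k : akind) (x : M) : Prop :=
  (forall i j, inA k (x i j)) /\ madj x = x.

Definition jprod (x y : M) : M := mscale (2%:R)^-1 (madd (mmul x y) (mmul y x)).

Definition symmetry (k : akind) (s : M) : Prop := inH k s /\ jprod s s = mid.

Definition Uop (s x : M) : M := madd (mscale 2%:R (jprod s (jprod s x))) (mopp x).

(* 2-local 1-automorphism of H_n(A) (only values on H_n(A) matter) *)
Definition two_local_1_aut (k : akind) (D : M -> M) : Prop :=
  forall x y, inH k x -> inH k y ->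
    exists s, symmetry k s /\ D x = Uop s x /\ D y = Uop s y.

Definition jordan_automorphism (k : akind) (D : M -> M) : Prop :=
  (forall x, inH k x -> inH k (D x)) /\
  (forall x y, inH k x -> inH k y -> D (madd x y) = madd (D x) (D y)) /\
  (forall (c : F) x, inH k x -> D (mscale c x) = mscale c (D x)) /\
  (forall x y, inH k x -> inH k y -> D (jprod x y) = jprod (D x) (D y)) /\
  (forall x y, inH k x -> inH k y -> D x = D y -> x = y) /\
  (forall y, inH k y -> exists2 x, inH k x & D x = y).

End MatOps.

(* Main.v *)
From HB Require Import structures.
Require Import Defs.
From mathcomp Require Import all_boot all_order all_algebra.
From mathcomp Require Import ring.
Set Implicit Arguments. Unset Strict Implicit. Unset Printing Implicit Defensive.
Import GRing.Theory.
Local Open Scope ring_scope.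

Section Q.
Variable F : fieldType.
Variables lam mu : F.

Definition qt (l m : F) := quat F.
Local Notation Q := (qt lam mu).
Definition q2t (a : quat F) := (q0 a, q1 a, q2 a, q3 a).
Definition t2q (t : F * F * F * F) := let: (a,b,c,d) := t in Quat a b c d.
Lemma q2tK : cancel q2t t2q. Proof. by case. Qed.
HB.instance Definition _ := Choice.copy Q (can_type q2tK).

Lemma qeq (a b : quat F) : q0 a = q0 b -> q1 a = q1 b -> q2 a = q2 b -> q3 a = q3 b -> a = b.
Proof. by case: a => ????; case: b => ???? /= -> -> -> ->. Qed.

Ltac qsolve := repeat match goal with a : quat F |- _ => case: a end; move=> * ; apply: qeq => /=; ring.

Lemma qaddA : associative (@qadd F). Proof. move=> a b c; qsolve. Qed.
Lemma qaddC : commutative (@qadd F). Proof. move=> a b; qsolve. Qed.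
Lemma qadd0 : left_id (qzero F) (@qadd F). Proof. move=> a; qsolve. Qed.
Lemma qaddN : left_inverse (qzero F) (@qopp F) (@qadd F). Proof. move=> a; qsolve. Qed.
Lemma qmulA : associative (qmul lam mu). Proof. move=> a b c; qsolve. Qed.
Lemma qmul1 : left_id (qone F) (qmul lam mu). Proof. move=> a; qsolve. Qed.
Lemma qmulr1 : right_id (qone F) (qmul lam mu). Proof. move=> a; qsolve. Qed.
Lemma qmulDl : left_distributive (qmul lam mu) (@qadd F). Proof. move=> a b c; qsolve. Qed.
Lemma qmulDr : right_distributive (qmul lam mu) (@qadd F). Proof. move=> a b c; qsolve. Qed.
Lemma qone0 : (qone F : Q) != qzero F.
Proof. apply/eqP => /(congr1 (@q0 F)) /= /eqP; by rewrite oner_eq0. Qed.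

HB.instance Definition _ := GRing.isNzRing.Build Q qaddA qaddC qadd0 qaddN qmulA qmul1 qmulr1 qmulDl qmulDr qone0.

Lemma qmulE (a b : Q) : qmul lam mu a b = a * b. Proof. by []. Qed.
Lemma qaddE (a b : Q) : qadd a b = a + b. Proof. by []. Qed.
Lemma qoppE (a : Q) : qopp a = - a. Proof. by []. Qed.
Lemma qzeroE : qzero F = (0 : Q). Proof. by []. Qed.
Lemma qoneE : qone F = (1 : Q). Proof. by []. Qed.

Definition qc (c : F) : Q := Quat c 0 0 0.
Lemma qcD c d : qc (c + d) = qc c + qc d. Proof. apply: qeq => /=; ring. Qed.
Lemma qcM c d : qc (c * d) = qc c * qc d. Proof. apply: qeq => /=; ring. Qed.
Lemma qc1 : qc 1 = 1. Proof. by []. Qed.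
Lemma qc0 : qc 0 = 0. Proof. by []. Qed.
Lemma qcC c (a : Q) : qc c * a = a * qc c. Proof. case: a => *; apply: qeq => /=; ring. Qed.
Lemma qscaleE c (a : Q) : qscale c a = qc c * a. Proof. case: a => *; apply: qeq => /=; ring. Qed.
Lemma q0D (a b : Q) : q0 (a + b) = q0 a + q0 b. Proof. by []. Qed.
Lemma q0_0 : q0 (0 : Q) = 0. Proof. by []. Qed.
Lemma q0_sum I r (P : pred I) (f : I -> Q) : q0 (\sum_(i <- r | P i) f i) = \sum_(i <- r | P i) q0 (f i).
Proof. exact: (big_morph _ q0D q0_0). Qed.
Lemma q0C (a b : Q) : q0 (a * b) = q0 (b * a). Proof. case: a b => ???? [] * /=; ring. Qed.
Lemma q0qc c (a : Q) : q0 (qc c * a) = c * q0 a. Proof. case: a => * /=; ring. Qed.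

Definition cj (a : Q) : Q := qconj a.
Lemma cjD (a b : Q) : cj (a + b) = cj a + cj b. Proof. case: a b => ???? [] *; apply: qeq => /=; ring. Qed.
Lemma cj0 : cj 0 = 0. Proof. apply: qeq => /=; ring. Qed.
Lemma cjM (a b : Q) : cj (a * b) = cj b * cj a. Proof. case: a b => ???? [] *; apply: qeq => /=; ring. Qed.
Lemma cjK (a : Q) : cj (cj a) = a. Proof. case: a => *; apply: qeq => /=; ring. Qed.
Lemma cj1 : cj 1 = 1. Proof. apply: qeq => /=; ring. Qed.
Lemma cjqc c : cj (qc c) = qc c. Proof. apply: qeq => /=; ring. Qed.
Lemma cj_sum I r (P : pred I) (f : I -> Q) : cj (\sum_(i <- r | P i) f i) = \sum_(i <- r | P i) cj (f i).
Proof. exact: (big_morph _ cjD cj0). Qed.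
Lemma q0cj (a : Q) : q0 (cj a) = q0 a. Proof. by []. Qed.

Variable k : akind.
Definition iA (a : Q) := inA k a.
Lemma iA0 : iA 0. Proof. by rewrite /iA; case: k => //=. Qed.
Lemma iA1 : iA 1. Proof. by rewrite /iA; case: k => //=. Qed.
Lemma iAD a b : iA a -> iA b -> iA (a + b).
Proof. case: a b => ???? [] ????; rewrite /iA; case: k => //= .
- by move=> [-> [-> ->]] [-> [-> ->]]; rewrite !addr0.
- by move=> [-> ->] [-> ->]; rewrite !addr0.
Qed.
Lemma iAM a b : iA a -> iA b -> iA (a * b).
Proof. case: a b => ???? [] ????; rewrite /iA; case: k => //= .
- move=> [-> [-> ->]] [-> [-> ->]]; split; [|split]; ring.
- move=> [-> ->] [-> ->]; split; ring.
Qed.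
Lemma iAN a : iA a -> iA (- a).
Proof. case: a => ????; rewrite /iA; case: k => //=.
- by move=> [-> [-> ->]]; rewrite !oppr0.
- by move=> [-> ->]; rewrite !oppr0.
Qed.
Lemma iAcj a : iA a -> iA (cj a).
Proof. case: a => ????; rewrite /iA; case: k => //=.
- by move=> [-> [-> ->]]; rewrite !oppr0.
- by move=> [-> ->]; rewrite !oppr0.
Qed.
Lemma iAqc c : iA (qc c). Proof. by rewrite /iA; case: k. Qed.
Lemma iA_sum I r (P : pred I) (f : I -> Q) : (forall i, P i -> iA (f i)) -> iA (\sum_(i <- r | P i) f i).
Proof. move=> h; apply: big_ind => //; [exact: iA0 | exact: iAD]. Qed.

Definition pk (a : Q) : Q :=
  match k with KindF => Quat (q0 a) 0 0 0 | KindB => Quat (q0 a) (q1 a) 0 0 | KindQ => a end.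
Lemma pkA a : iA (pk a). Proof. by rewrite /iA /pk; case: k. Qed.
Lemma pk_id a : iA a -> pk a = a.
Proof. case: a => ????; rewrite /iA /pk; case: k => //=.
- by move=> [-> [-> ->]].
- by move=> [-> ->].
Qed.
Lemma pkD a b : pk (a + b) = pk a + pk b.
Proof. rewrite /pk; case: k => //; apply: qeq => /=; ring. Qed.
Lemma pkqc c a : pk (qc c * a) = qc c * pk a.
Proof. case: a => *; rewrite /pk; case: k => //; apply: qeq => /=; ring. Qed.
Lemma pkcj a : pk (cj a) = cj (pk a).
Proof. case: a => *; rewrite /pk; case: k => //; apply: qeq => /=; ring. Qed.
Lemma q0pk a b : iA a -> q0 (a * pk b) = q0 (a * b).
Proof. case: a b => ???? [] ????; rewrite /iA /pk; case: k => //=.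
- move=> [-> [-> ->]]; ring.
- move=> [-> ->]; ring.
Qed.

End Q.

Module MM.

Section M.
Variable F : fieldType.
Variables lam mu : F.
Variable k : akind.
Variable n : nat.
Local Notation Q := (qt lam mu).
Local Notation M := 'M[Q]_n.
Local Notation qc := (@qc F lam mu).
Local Notation cj := (@cj F lam mu).

Lemma maddE (x y : M) : madd x y = x + y.
Proof. by apply/matrixP => i j; rewrite !mxE. Qed.
Lemma moppE (x : M) : mopp x = - x.
Proof. by apply/matrixP => i j; rewrite !mxE. Qed.
Lemma mscaleE c (x : M) : mscale c x = qc c *: x.
Proof. by apply/matrixP => i j; rewrite !mxE (@qscaleE _ lam mu). Qed.
Lemma mmulE (x y : M) : mmul lam mu x y = x *m y.
Proof. by apply/matrixP => i j; rewrite !mxE. Qed.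
Lemma midE : @mid F n = (1%:M : M).
Proof. by apply/matrixP => i j; rewrite !mxE; case: eqP. Qed.

Lemma mulmx_qc c (A B : M) : A *m (qc c *: B) = qc c *: (A *m B).
Proof.
apply/matrixP => i j; rewrite !mxE mulr_sumr; apply: eq_bigr => l _.
by rewrite !mxE mulrA -qcC mulrA.
Qed.

Definition ma (x : M) : M := \matrix_(i, j) cj (x j i).
Lemma maE (x : M) : madj x = ma x. Proof. by []. Qed.
Lemma maD (x y : M) : ma (x + y) = ma x + ma y.
Proof. by apply/matrixP => i j; rewrite !mxE cjD. Qed.
Lemma maZ c (x : M) : ma (qc c *: x) = qc c *: ma x.
Proof. by apply/matrixP => i j; rewrite !mxE cjM cjqc qcC. Qed.
Lemma maK (x : M) : ma (ma x) = x.
Proof. by apply/matrixP => i j; rewrite !mxE cjK. Qed.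
Lemma maM (x y : M) : ma (x *m y) = ma y *m ma x.
Proof.
apply/matrixP => i j; rewrite !mxE cj_sum; apply: eq_bigr => l _.
by rewrite !mxE cjM.
Qed.
Lemma maN (x : M) : ma (- x) = - ma x.
Proof. apply/matrixP => i j; rewrite !mxE; apply: qeq => /=; ring. Qed.

Definition H (x : M) := inH k x.
Lemma Hent (x : M) : H x -> forall i j, @iA F lam mu k (x i j).
Proof. by case. Qed.
Lemma Hadj (x : M) : H x -> ma x = x.
Proof. by case. Qed.
Lemma H0 : H 0.
Proof. split; first by move=> i j; rewrite mxE; exact: iA0.
by apply/matrixP => i j; rewrite !mxE; apply: qeq => /=; ring. Qed.
Lemma HD (x y : M) : H x -> H y -> H (x + y).
Proof. move=> [ex ax] [ey ay]; split; last by rewrite maE maD -!maE ax ay.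
by move=> i j; rewrite mxE; apply: iAD; [exact: ex | exact: ey]. Qed.
Lemma HN (x : M) : H x -> H (- x).
Proof. move=> [ex ax]; split; last by rewrite maE maN -!maE ax.
by move=> i j; rewrite mxE; apply: iAN; exact: ex. Qed.
Lemma HZ c (x : M) : H x -> H (qc c *: x).
Proof. move=> [ex ax]; split; last by rewrite maE maZ -!maE ax.
by move=> i j; rewrite mxE; apply: iAM; [exact: iAqc | exact: ex]. Qed.
Lemma entM (x y : M) : (forall i j, @iA F lam mu k (x i j)) -> (forall i j, @iA F lam mu k (y i j)) ->
  forall i j, @iA F lam mu k ((x *m y) i j).
Proof. move=> ex ey i j; rewrite mxE; apply: iA_sum => l _; exact: iAM (ex i l) (ey l j). Qed.
Lemma H3 (s x : M) : H s -> H x -> H (s *m x *m s).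
Proof. move=> [es as_] [ex ax]; split; last by rewrite maE !maM -!maE as_ ax mulmxA.
by apply: entM => //; apply: entM. Qed.
Lemma HM2 (x y : M) : H x -> H y -> H (x *m y + y *m x).
Proof. move=> [ex ax] [ey ay]; split; last by rewrite maE maD !maM -!maE ax ay addrC.
by move=> i j; rewrite mxE; apply: iAD; apply: entM. Qed.
Lemma Hsq (x : M) : H x -> H (x *m x).
Proof. move=> [ex ax]; split; last by rewrite maE !maM -!maE ax.
by apply: entM. Qed.
Lemma H_sum I r (P : pred I) (f : I -> M) : (forall i, P i -> H (f i)) -> H (\sum_(i <- r | P i) f i).
Proof. move=> h; apply: big_ind => //; [exact: H0 | exact: HD]. Qed.

Definition Bf (x y : M) : F := q0 (\tr (x *m y)).
Lemma trC (x y : M) : q0 (\tr (x *m y)) = q0 (\tr (y *m x)).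
Proof.
rewrite /mxtrace !q0_sum.
under eq_bigr => i _ do rewrite mxE q0_sum.
under [RHS]eq_bigr => i _ do rewrite mxE q0_sum.
rewrite exchange_big /=; apply: eq_bigr => i _; apply: eq_bigr => j _; exact: q0C.
Qed.
Lemma BC (x y : M) : Bf x y = Bf y x. Proof. exact: trC. Qed.
Lemma BD (x y z : M) : Bf (x + y) z = Bf x z + Bf y z.
Proof. by rewrite /Bf mulmxDl mxtraceD q0D. Qed.
Lemma B0 (z : M) : Bf 0 z = 0.
Proof. by rewrite /Bf mul0mx mxtrace0. Qed.
Lemma BZ c (x z : M) : Bf (qc c *: x) z = c * Bf x z.
Proof. by rewrite /Bf -scalemxAl mxtraceZ q0qc. Qed.
Lemma BN (x z : M) : Bf (- x) z = - Bf x z.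
Proof. by rewrite /Bf mulNmx raddfN. Qed.
Lemma Bsum I r (P : pred I) (f : I -> M) z : Bf (\sum_(i <- r | P i) f i) z = \sum_(i <- r | P i) Bf (f i) z.
Proof. exact: (big_morph (fun x => Bf x z) (fun x y => BD x y z) (B0 z)). Qed.
Lemma BDr (x y z : M) : Bf z (x + y) = Bf z x + Bf z y.
Proof. by rewrite !(BC z) BD. Qed.
Lemma BZr c (x z : M) : Bf z (qc c *: x) = c * Bf z x.
Proof. by rewrite !(BC z) BZ. Qed.
Lemma BNr (x z : M) : Bf z (- x) = - Bf z x.
Proof. by rewrite !(BC z) BN. Qed.
Lemma Bsumr I r (P : pred I) (f : I -> M) z : Bf z (\sum_(i <- r | P i) f i) = \sum_(i <- r | P i) Bf z (f i).
Proof. rewrite BC Bsum; apply: eq_bigr => i _; exact: BC. Qed.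
Lemma BU (s x y : M) : s *m s = 1%:M -> Bf (s *m x *m s) (s *m y *m s) = Bf x y.
Proof.
move=> ss; rewrite /Bf.
have -> : s *m x *m s *m (s *m y *m s) = s *m (x *m y *m s).
  by rewrite !mulmxA -(mulmxA _ s s) ss mulmx1.
by rewrite trC -mulmxA ss mulmx1.
Qed.


Hypothesis h2 : (2%:R : F) != 0.
Hypothesis hlam : lam != 0.
Hypothesis hmu : mu != 0.

Lemma twice (Z : M) : Z + Z = qc 2%:R *: Z.
Proof. by rewrite mulr2n qcD qc1 scalerDl scale1r. Qed.
Lemma twohalf (Z : M) : qc 2%:R *: (qc (2%:R^-1) *: Z) = Z.
Proof. by rewrite scalerA -qcM mulfV // qc1 scale1r. Qed.
Lemma half (Z : M) : qc (2%:R^-1) *: (Z + Z) = Z.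
Proof. by rewrite twice scalerA -qcM mulVf // qc1 scale1r. Qed.

Definition pm (y : M) : M := \matrix_(i, j) pk k (y i j).
Definition P (y : M) : M := qc (2%:R^-1) *: (pm y + ma (pm y)).

Lemma pmD (x y : M) : pm (x + y) = pm x + pm y.
Proof. by apply/matrixP => i j; rewrite !mxE pkD. Qed.
Lemma pmZ c (x : M) : pm (qc c *: x) = qc c *: pm x.
Proof. by apply/matrixP => i j; rewrite !mxE pkqc. Qed.
Lemma HP (y : M) : H (P y).
Proof.
split.
  move=> i j; rewrite !mxE; apply: iAM; first exact: iAqc.
  by apply: iAD; [exact: pkA | apply: iAcj; exact: pkA].
by rewrite maE /P maZ maD maK addrC.
Qed.
Lemma P_id (h : M) : H h -> P h = h.
Proof.
move=> hH; rewrite /P.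
have -> : pm h = h by apply/matrixP => i j; rewrite mxE pk_id //; exact: Hent.
by rewrite (Hadj hH) half.
Qed.
Lemma PD (x y : M) : P (x + y) = P x + P y.
Proof. rewrite /P pmD maD. rewrite -scalerDr. rewrite addrACA. reflexivity. Qed.
Lemma PZ c (x : M) : P (qc c *: x) = qc c *: P x.
Proof. by rewrite /P pmZ maZ -scalerDr !scalerA qcC. Qed.
Lemma P0 : P 0 = 0.
Proof. have h := PD 0 0; rewrite addr0 in h; apply: (addrI (P 0)); by rewrite addr0 -h. Qed.
Lemma P_sum I r (Pr : pred I) (f : I -> M) : P (\sum_(i <- r | Pr i) f i) = \sum_(i <- r | Pr i) P (f i).
Proof. exact: (big_morph P PD P0). Qed.

Lemma q0trma (z : M) : q0 (\tr (ma z)) = q0 (\tr z).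
Proof. by rewrite /mxtrace !q0_sum; apply: eq_bigr => i _; rewrite mxE q0cj. Qed.
Lemma B_ma (h y : M) : ma h = h -> Bf h (ma y) = Bf h y.
Proof. move=> ah; rewrite /Bf -{1}ah -maM q0trma -/(Bf y h); exact: BC. Qed.
Lemma B_pm (h y : M) : (forall i j, @iA F lam mu k (h i j)) -> Bf h (pm y) = Bf h y.
Proof.
move=> eh; rewrite /Bf /mxtrace !q0_sum; apply: eq_bigr => i _.
rewrite !mxE !q0_sum; apply: eq_bigr => l _; rewrite mxE; exact: q0pk.
Qed.
Lemma B_P (h y : M) : H h -> Bf h (P y) = Bf h y.
Proof.
move=> hH; rewrite /P BZr BDr B_ma ?(Hadj hH) // !B_pm //; last exact: Hent.
set a := Bf h y; field; exact: h2.
Qed.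

Lemma Bdelta (h : M) i j (e : Q) : Bf h (e *: delta_mx j i) = q0 (h i j * e).
Proof.
rewrite /Bf /mxtrace (bigD1 i) //= big1 ?addr0 => [|p pi].
  rewrite mxE (bigD1 j) //= big1 ?addr0 => [|r rj]; first by rewrite !mxE !eqxx mulr1.
  by rewrite !mxE (negbTE rj) mulr0 mulr0.
rewrite mxE big1 // => r _; by rewrite !mxE (negbTE pi) andbF mulr0 mulr0.
Qed.

Lemma nondeg (h : M) : H h -> (forall x, H x -> Bf h x = 0) -> h = 0.
Proof.
move=> hH hB; apply/matrixP => i j; rewrite mxE.
have Z e : q0 (h i j * e) = 0 by rewrite -Bdelta -B_P //; apply: hB; exact: HP.
move: (Z 1) (Z (Quat 0 1 0 0)) (Z (Quat 0 0 1 0)) (Z (Quat 0 0 0 1)).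
case: (h i j) => a0 a1 a2 a3 /=.
rewrite !(mulr0, mul0r, mulr1, addr0, add0r, subr0, sub0r) => -> /eqP.
rewrite mulf_eq0 (negbTE hlam) /= => /eqP -> /eqP.
rewrite mulf_eq0 (negbTE hmu) /= => /eqP -> /eqP.
by rewrite oppr_eq0 !mulf_eq0 (negbTE hmu) (negbTE hlam) /= => /eqP ->.
Qed.

Lemma sym_ss (s : M) : symmetry lam mu k s -> H s /\ s *m s = 1%:M.
Proof.
move=> [hs js]; split => //.
move: js; rewrite /jprod mscaleE maddE mmulE midE; by rewrite half.
Qed.

Lemma UopE (s x : M) : s *m s = 1%:M -> Uop lam mu s x = s *m x *m s.
Proof.
move=> ss; rewrite /Uop /jprod !mmulE !maddE !mscaleE moppE.
rewrite mulmx_qc -scalemxAl.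
have e1 : s *m (s *m x + x *m s) = x + s *m x *m s by rewrite mulmxDr !mulmxA ss mul1mx.
have e2 : (s *m x + x *m s) *m s = s *m x *m s + x by rewrite mulmxDl -(mulmxA x) ss mulmx1.
by rewrite e1 e2 (addrC _ x) half twohalf addrC addKr.
Qed.

End M.

End MM.
Import MM.

Section S.
Variable F : fieldType.
Variables lam mu : F.
Local Notation Q := (qt lam mu).
Local Notation qc := (@qc F lam mu).

Definition eb (q : 'I_4) : Q :=
  match val q with 0 => 1 | 1 => Quat 0 1 0 0 | 2 => Quat 0 0 1 0 | _ => Quat 0 0 0 1 end.
Definition cq (q : 'I_4) (a : Q) : F :=
  match val q with 0 => q0 a | 1 => q1 a | 2 => q2 a | _ => q3 a end.
Lemma qdec (a : Q) : a = \sum_(q < 4) qc (cq q a) * eb q.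
Proof.
rewrite !big_ord_recl big_ord0 /=.
case: a => a0 a1 a2 a3; apply: qeq; rewrite /cq /=; cbn; ring.
Qed.

Variable n : nat.
Local Notation M := 'M[Q]_n.
Lemma mdec (x : M) : x = \sum_(i < n) \sum_(j < n) \sum_(q < 4) qc (cq q (x i j)) *: (eb q *: delta_mx i j).
Proof.
rewrite {1}(matrix_sum_delta x); apply: eq_bigr => i _; apply: eq_bigr => j _.
rewrite {1}(qdec (x i j)) scaler_suml; apply: eq_bigr => q _; by rewrite scalerA.
Qed.

Definition I := ('I_n * 'I_n * 'I_4)%type.
Lemma sumI (f : 'I_n -> 'I_n -> 'I_4 -> M) :
  \sum_(i < n) \sum_(j < n) \sum_(q < 4) f i j q = \sum_(l < #|{: I}|) f (enum_val l).1.1 (enum_val l).1.2 (enum_val l).2.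
Proof.
rewrite pair_big /= pair_big /=.
by rewrite (big_enum_val (fun t : I => f t.1.1 t.1.2 t.2)).
Qed.

Variable k : akind.
Hypothesis h2 : (2%:R : F) != 0.
Hypothesis hlam : lam != 0.
Hypothesis hmu : mu != 0.
Variable D : M -> M.
Hypothesis TL : two_local_1_aut lam mu k D.
Local Notation H := (@H F lam mu k n).
Local Notation Bf := (@Bf F lam mu n).
Local Notation P := (@P F lam mu k n).

Lemma Dpair (x y : M) : H x -> H y ->
  exists s : M, [/\ s *m s = 1%:M, H s, D x = s *m x *m s & D y = s *m y *m s].
Proof.
move=> hx hy; have [s [sy [e1 e2]]] := TL hx hy.
have [hs ss] := sym_ss h2 sy.
by exists s; split => //; rewrite ?e1 ?e2 UopE.
Qed.

Lemma DH (x : M) : H x -> H (D x).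
Proof. move=> hx; have [s [_ hs -> _]] := Dpair hx hx; exact: H3. Qed.
Lemma DB (x y : M) : H x -> H y -> Bf (D x) (D y) = Bf x y.
Proof. move=> hx hy; have [s [ss _ -> ->]] := Dpair hx hy; exact: BU. Qed.
Lemma DZ c (x : M) : H x -> D (qc c *: x) = qc c *: D x.
Proof.
move=> hx; have [s [ss _ -> ->]] := Dpair hx (HZ c hx).
by rewrite mulmx_qc -scalemxAl.
Qed.
Lemma Dsq (x : M) : H x -> D (x *m x) = D x *m D x.
Proof.
move=> hx; have [s [ss _ -> ->]] := Dpair hx (Hsq hx).
by rewrite !mulmxA -(mulmxA _ s s) ss mulmx1.
Qed.
Lemma Dinj (x y : M) : H x -> H y -> D x = D y -> x = y.
Proof.
move=> hx hy; have [s [ss _ -> ->]] := Dpair hx hy; move=> e.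
have K z : s *m (s *m z *m s) *m s = z.
  by rewrite !mulmxA ss mul1mx -mulmxA ss mulmx1.
by rewrite -(K x) e K.
Qed.
Lemma D0 : D 0 = 0.
Proof. by have := DZ 0 (H0 lam mu k n); rewrite qc0 !scale0r. Qed.

Definition m := #|{: I}|.
Definition b (l : 'I_m) : M := P (eb (enum_val l).2 *: delta_mx (enum_val l).1.1 (enum_val l).1.2).
Definition cf (l : 'I_m) (h : M) : F := cq (enum_val l).2 (h (enum_val l).1.1 (enum_val l).1.2).
Lemma bH l : H (b l). Proof. exact: HP. Qed.
Lemma Hdec (h : M) : H h -> h = \sum_(l < m) qc (cf l h) *: b l.
Proof.
move=> hh; rewrite -{1}(P_id h2 hh) {1}(mdec h) sumI P_sum.
by apply: eq_bigr => l _; rewrite PZ.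
Qed.
Lemma Bdec (x z : M) : H x -> Bf x z = \sum_(l < m) cf l x * Bf (b l) z.
Proof. move=> hx; rewrite {1}(Hdec hx) Bsum; apply: eq_bigr => l _; exact: BZ. Qed.

Definition G : 'M[F]_m := \matrix_(a, c) Bf (b a) (b c).
Definition Mm : 'M[F]_m := \matrix_(a, c) cf c (D (b a)).

Lemma mulr3 (x y z w : F) : z = w -> x * (y * z) = x * w * y.
Proof. by move=> ->; rewrite mulrA mulrAC. Qed.

Lemma E1 : G = Mm *m G *m Mm^T.
Proof.
apply/matrixP => a c; rewrite !mxE -(DB (bH a) (bH c)) (Bdec _ (DH (bH a))).
under eq_bigr => l _ do rewrite BC (Bdec _ (DH (bH c))) big_distrr /=.
under [RHS]eq_bigr => p _ do rewrite !mxE big_distrl /=.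
rewrite exchange_big /=; apply: eq_bigr => l _; apply: eq_bigr => p _.
rewrite [Mm a p]mxE [G p l]mxE; apply: mulr3; exact: BC.
Qed.

Lemma Key (v : M) : H v -> exists u : 'rV[F]_m, v = \sum_(l < m) qc (u 0 l) *: D (b l).
Proof.
move=> hv; pose c : 'rV[F]_m := \row_l cf l v.
have r1 : (\rank G <= \rank (Mm *m G))%N by rewrite {1}E1; exact: mxrankM_maxl.
have sub : (Mm *m G <= G)%MS := submxMl Mm G.
have sup : (G <= Mm *m G)%MS.
  by rewrite -(mxrank_leqif_sup sub).2 eqn_leq r1 mxrankM_maxr.
have /submxP [u cu] := submx_trans (submxMl c G) sup.
exists u; set v' := \sum_(l < m) _.
have hv' : H v' by apply: H_sum => l _; apply: HZ; apply: DH; exact: bH.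
apply/eqP; rewrite -subr_eq0; apply/eqP; apply: (nondeg h2 hlam hmu).
  exact: (HD hv (HN hv')).
move=> x hx; rewrite (Hdec hx) Bsumr big1 // => j _; rewrite BZr.
have -> : Bf (v - v') (b j) = 0; last by rewrite mulr0.
rewrite BD BN Bdec // Bsum.
have -> : \sum_(l < m) cf l v * Bf (b l) (b j) = (c *m G) 0 j.
  by rewrite mxE; apply: eq_bigr => l _; rewrite !mxE.
rewrite cu mxE; apply/eqP; rewrite subr_eq0; apply/eqP; apply: eq_bigr => l _.
rewrite BZ (Bdec _ (DH (bH l))) mxE; congr (_ * _); apply: eq_bigr => p _; by rewrite !mxE.
Qed.

Lemma Dadd (x y : M) : H x -> H y -> D (x + y) = D x + D y.
Proof.
move=> hx hy.
have hxy := HD hx hy.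
have hw : H (D (x + y) - D x - D y).
  exact: (HD (HD (DH hxy) (HN (DH hx))) (HN (DH hy))).
have w0 : D (x + y) - D x - D y = 0.
  apply: (nondeg h2 hlam hmu hw) => z hz.
  have [u ->] := Key hz.
  rewrite Bsumr big1 // => l _; rewrite BZr.
  rewrite !BD !BN !(DB _ (bH l)) // BD; by rewrite [Bf x _ + _]addrC addrK subrr mulr0.
by apply/eqP; rewrite -subr_eq0 opprD addrA; apply/eqP.
Qed.

Lemma Dsub (x y : M) : H x -> H y -> D (x - y) = D x - D y.
Proof.
move=> hx hy; have hxy := HD hx (HN hy).
by rewrite -[in RHS](subrK y x) (Dadd hxy hy) addrK.
Qed.

Lemma Dlin (u : 'rV[F]_m) : let x := \sum_(l < m) qc (u 0 l) *: b l in
  H x /\ D x = \sum_(l < m) qc (u 0 l) *: D (b l).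
Proof.
apply: (big_ind2 (fun a c => H a /\ D a = c)).
- by split; [exact: H0 | exact: D0].
- by move=> a1 c1 a2 c2 [h1 <-] [h2' <-]; split; [exact: HD | exact: Dadd].
- by move=> l _; split; [exact: HZ (bH l) | exact: DZ (bH l)].
Qed.

Lemma zA (V : zmodType) (A B C E : V) : A + B + (C + E) - A - E = B + C.
Proof. by rewrite addrA (addrAC _ _ (-A)) (addrAC _ C) addrK (addrC A) addrK. Qed.

Lemma Djp (x y : M) : H x -> H y -> D (x *m y + y *m x) = D x *m D y + D y *m D x.
Proof.
move=> hx hy.
have e (a c : M) : a *m c + c *m a = (a + c) *m (a + c) - a *m a - c *m c.
  rewrite mulmxDl !mulmxDr.
  by rewrite zA.
have hxy := HD hx hy.
rewrite e (Dsub (HD (Hsq hxy) (HN (Hsq hx))) (Hsq hy)) (Dsub (Hsq hxy) (Hsq hx)).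
by rewrite !Dsq // Dadd // -e.
Qed.

End S.

Theorem main_thm (F : fieldType) (lam mu : F) (k : akind) (n : nat) :
  (2%:R : F) != 0 ->
  lam != 0 -> mu != 0 ->
  forall D : 'M[quat F]_n -> 'M[quat F]_n,
    two_local_1_aut lam mu k D -> jordan_automorphism lam mu k D.
Proof.
move=> h2 hlam hmu D TL.
have DH' := DH h2 TL.
split; [|split; [|split; [|split; [|split]]]].
- move=> x hx; exact: DH'.
- move=> x y hx hy; rewrite !(@maddE F lam mu n); exact: (Dadd h2 hlam hmu TL hx hy).
- move=> c x hx; rewrite !(@mscaleE F lam mu n); exact: (DZ h2 TL c hx).
- move=> x y hx hy; rewrite /jprod !(@mmulE F lam mu n) !(@maddE F lam mu n) !(@mscaleE F lam mu n).
  by rewrite (DZ h2 TL _ (HM2 hx hy)) (Djp h2 hlam hmu TL hx hy).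
- move=> x y hx hy; exact: (Dinj h2 TL hx hy).
- move=> y hy; have [u ->] := Key h2 hlam hmu TL hy.
  have [hx ex] := Dlin h2 hlam hmu TL u.
  by exists (\sum_(l < m n) qc lam mu (u 0 l) *: b lam mu k l).

Qed.


Theorem theorem4p7 (F : fieldType) (lam mu : F) (k : akind) (n : nat) :
  (2%:R : F) != 0 ->
  (3 <= n)%N ->
  lam != 0 -> mu != 0 ->
  division_alg lam mu k ->
  forall D : 'M[quat F]_n -> 'M[quat F]_n,
    two_local_1_aut lam mu k D -> jordan_automorphism lam mu k D.
Proof.
move=> h2 _ hlam hmu _ D TL; exact: (main_thm h2 hlam hmu TL).
Qed.
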